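(* We may fix a basis for the matrices in $\mathcal{M}_k^j(\rho^2)$ such that $G=\Omega_j\,\mathrm{diag}\{x_1,\dots,x_k\}$, where $x_r$, $r=1,\dots,k$, are $k$-th roots of unity.
   Context: Non-singular monad matrices are $(A,B,C,D)$ with $A\in GL(k,\mathbb{C})$, $B\in Mat_{k\times k}(\mathbb{C})$, $C\in Mat_{k\times 2}(\mathbb{C})$, $D\in Mat_{2\times k}(\mathbb{C})$, satisfying $[A,B]+CD=0$ and the full-rank conditions ($\begin{pmatrix}A-y\mathbb{1}_k\\ B-x\mathbb{1}_k\\ D\end{pmatrix}$ injective and $\begin{pmatrix}x\mathbb{1}_k-B & A-y\mathbb{1}_k & C\end{pmatrix}$ surjective for all $x,y\in\mathbb{C}$), considered up to $(A,B,C,D)\sim(hAh^{-1},hBh^{-1},hC,Dh^{-1})$, $h\in GL(k,\mathbb{C})$. Here $j\in\mathbb{Z}_{2k}$ is even, and $\mathcal{M}_k^j(\rho^2)$ is the set of such matrices for which there is $G\in GL(k,\mathbb{C})$ with $e^{\imath\frac{2j\pi}{k}}A=GAG^{-1}$, $e^{\imath\frac{2\pi}{k}}B=GBG^{-1}$, $e^{\imath\frac{\pi}{k}}C=GC\,\mathrm{adj}(\sigma_{2j\pi/k})$, $e^{\imath\frac{\pi}{k}}D=\sigma_{2j\pi/k}DG^{-1}$, where $\sigma_\varphi=\mathrm{diag}(e^{-\imath\frac{3\varphi}{4}},e^{-\imath\frac{\varphi}{4}})$ and $\mathrm{adj}(\sigma)=\det(\sigma)\sigma^{-1}$. $\Omega_j=e^{\imath\frac{(2-j)\pi}{2k}}$.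 *)

(* Defs.v *)
From HB Require Import structures.
From mathcomp Require Import all_boot all_order all_algebra.
From mathcomp Require Import all_classical all_reals.
From mathcomp Require Import trigo.
From mathcomp Require Import complex.
Set Implicit Arguments. Unset Strict Implicit. Unset Printing Implicit Defensive.
Import Order.TTheory GRing.Theory Num.Theory.
Local Open Scope ring_scope.

Section Defs.
Variable R : realType.
Local Notation C := R[i].

Definition expi (t : R) : C := Complex (cos t) (sin t).

Definition sigma_mx (phi : R) : 'M[C]_2 :=
  diag_mx (\row_(r < 2) if (r : nat) == 0%N then expi (- (3%:R * phi / 4%:R))
                        else expi (- (phi / 4%:R))).

Definition adj2 (s : 'M[C]_2) : 'M[C]_2 := (\det s) *: invmx s.

Definition Omega (k j : nat) : C := expi ((2%:R - j%:R) * pi / (2%:R * k%:R)).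

Definition nonsingular_monad (k : nat) (A B : 'M[C]_k) (Cm : 'M[C]_(k, 2))
    (D : 'M[C]_(2, k)) : Prop :=
  [/\ A \in unitmx,
      A *m B - B *m A + Cm *m D = 0,
      (forall x y : C, forall v : 'cV[C]_k,
          col_mx (A - y%:M) (col_mx (B - x%:M) D) *m v = 0 -> v = 0) &
      (forall x y : C, forall w : 'cV[C]_k, exists u : 'cV[C]_(k + (k + 2)),
          row_mx (x%:M - B) (row_mx (A - y%:M) Cm) *m u = w)].

(* G in GL(k) realises the Z_{2k}-symmetry rho^2 (indexed by j) on (A,B,C,D) *)
Definition rho2_witness (k j : nat) (A B : 'M[C]_k) (Cm : 'M[C]_(k, 2))
    (D : 'M[C]_(2, k)) (G : 'M[C]_k) : Prop :=
  let phi := 2%:R * j%:R * pi / k%:R in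
  [/\ G \in unitmx,
      expi (2%:R * j%:R * pi / k%:R) *: A = G *m A *m invmx G,
      expi (2%:R * pi / k%:R) *: B = G *m B *m invmx G,
      expi (pi / k%:R) *: Cm = G *m Cm *m adj2 (sigma_mx phi) &
      expi (pi / k%:R) *: D = sigma_mx phi *m D *m invmx G].

Definition in_Mkj (k j : nat) (A B : 'M[C]_k) (Cm : 'M[C]_(k, 2))
    (D : 'M[C]_(2, k)) : Prop :=
  nonsingular_monad A B Cm D /\ exists G, rho2_witness j A B Cm D G.

End Defs.

(* Main.v *)
Require Import Defs.
From HB Require Import structures.
From mathcomp Require Import all_boot all_order all_algebra all_field.
From mathcomp Require Import all_classical all_reals.
From mathcomp Require Import trigo.
From mathcomp Require Import complex.
Import Order.TTheory GRing.Theory Num.Theory.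
Local Open Scope ring_scope.
From mathcomp.algebra_tactics Require Import ring.
Set Implicit Arguments. Unset Strict Implicit. Unset Printing Implicit Defensive.
Section Trig.
Variable R : realType.

Lemma expiD (a b : R) : expi (a + b) = expi a * expi b.
Proof. by rewrite /expi cosD sinD /=; congr Complex; ring. Qed.

Lemma expi0 : expi (0 : R) = 1.
Proof. by rewrite /expi cos0 sin0. Qed.

Lemma expi_neq0 (a : R) : expi a != 0.
Proof.
apply/negP => /eqP H.
have : expi a * expi (- a) = 1 by rewrite -expiD subrr expi0.
by rewrite H mul0r => /eqP; rewrite eq_sym oner_eq0.
Qed.

Lemma expi_nat (t : R) (N : nat) : expi t ^+ N = expi (N%:R * t).
Proof.
elim: N => [|N IH]; first by rewrite expr0 mul0r expi0.
by rewrite exprS IH -expiD -addn1 natrD mulrDl mul1r addrC.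
Qed.

Lemma expi_period (t : R) (N : nat) : expi (t + N%:R * (pi *+ 2)) = expi t.
Proof.
rewrite expiD -expi_nat.
have -> : expi (pi *+ 2 : R) = 1 by rewrite /expi cos2pi sin2pi.
by rewrite expr1n mulr1.
Qed.
End Trig.
Lemma stab_zero (F : numClosedFieldType) (n : nat) (A B M : 'M[F]_n)
   (Cm : 'M[F]_(n, 2)) (D : 'M[F]_(2, n)) :
  A *m B - B *m A + Cm *m D = 0 ->
  (forall x y : F, forall v : 'cV[F]_n,
          col_mx (A - y%:M) (col_mx (B - x%:M) D) *m v = 0 -> v = 0) ->
  M *m A = A *m M -> M *m B = B *m M -> D *m M = 0 -> M = 0.
Proof.
move=> hcomm hinj hMA hMB hDM.
apply/eqP; rewrite -trmx_eq0; apply/idPn => hU.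
set U := M^T in hU.
have UD : U *m D^T = 0 by rewrite /U -trmx_mul hDM trmx0.
have stabA : stablemx U A^T by rewrite /U -trmx_mul -hMA trmx_mul submxMl.
have stabB : stablemx U B^T by rewrite /U -trmx_mul -hMB trmx_mul submxMl.
set V := row_base U.
have VD : V *m D^T = 0.
  have /submxP [X ->] : (V <= U)%MS by rewrite eq_row_base.
  by rewrite -mulmxA UD mulmx0.
have Vc : V *m (A^T *m B^T) = V *m (B^T *m A^T).
  apply/eqP; rewrite -subr_eq0 -mulmxBr.
  have -> : A^T *m B^T - B^T *m A^T = D^T *m Cm^T.
    rewrite -!trmx_mul -linearB /=; apply: (congr1 trmx).
    by move/eqP: hcomm; rewrite addrC addr_eq0 opprB => /eqP <-.
  by rewrite mulmxA VD mul0mx.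
have sVA : stablemx V A^T by rewrite stablemx_row_base.
have sVB : stablemx V B^T by rewrite stablemx_row_base.
have rpos : (0 < \rank U)%N by rewrite lt0n mxrank_eq0.
have hc : restrictmx U A^T *m restrictmx U B^T = restrictmx U B^T *m restrictmx U A^T.
  rewrite -!conjmxM ?inE //.
  by rewrite /conjmx Vc.
have [v vN0 /andP [svA svB]] := common_eigenvector2 rpos hc.
rewrite stablemx_restrict // in svA.
rewrite stablemx_restrict // in svB.
set u := v *m V in svA svB.
have uN0 : u != 0 by rewrite /u mulmx_free_eq0 ?row_base_free.
have uD : u *m D^T = 0 by rewrite /u -mulmxA VD mulmx0.
move/eigenvectorP: svA => [a /eigenspaceP ua].
move/eigenvectorP: svB => [b /eigenspaceP ub].
clearbody u.
have ua' : A *m u^T = a *: u^T by rewrite -[LHS]trmxK trmx_mul trmxK ua linearZ.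
have ub' : B *m u^T = b *: u^T by rewrite -[LHS]trmxK trmx_mul trmxK ub linearZ.
have uD' : D *m u^T = 0 by rewrite -[LHS]trmxK trmx_mul trmxK uD trmx0.
have w0 : u^T = 0.
  apply: (hinj b a).
  rewrite mul_col_mx mul_col_mx !mulmxBl !mul_scalar_mx ua' ub' uD'.
  by rewrite !subrr !col_mx0.
by move: uN0; rewrite -trmx_eq0 w0 eqxx.
Qed.
Lemma intertwineX (F : fieldType) m p (X : 'M[F]_(m.+1, p.+1)) T G :
  X *m G = T *m X -> forall e, X *m G ^+ e = T ^+ e *m X.
Proof.
move=> h; elim=> [|e IH]; first by rewrite !expr0 mulmx1 mul1mx.
by rewrite exprSr -mulmxE mulmxA IH -mulmxA h mulmxA exprSr -mulmxE.
Qed.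

Lemma diagX (F : fieldType) m (d : 'rV[F]_m.+1) e :
  diag_mx d ^+ e = diag_mx (\row_i d 0 i ^+ e).
Proof.
elim: e => [|e IH].
  by rewrite expr0; apply/matrixP => i j; rewrite !mxE.
rewrite exprSr IH -mulmxE mulmx_diag; congr diag_mx.
by apply/rowP => i; rewrite !mxE exprSr.
Qed.

Lemma commX (F : fieldType) m (G A : 'M[F]_m.+1) c :
  G *m A = c *: (A *m G) -> forall e, G ^+ e *m A = c ^+ e *: (A *m G ^+ e).
Proof.
move=> h; elim=> [|e IH]; first by rewrite !expr0 mulmx1 mul1mx scale1r.
rewrite exprS -mulmxE -mulmxA IH -scalemxAr.
by rewrite [in LHS]mulmxA h -scalemxAl scalerA -mulmxA exprS mulrC.
Qed.

Lemma sep_Xn (F : numClosedFieldType) k : (0 < k)%N ->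
  exists2 rs : seq F, uniq rs & ('X^k - 1 : {poly F}) = \prod_(z <- rs) ('X - z%:P).
Proof.
move=> k0.
have [rs hrs] := closed_field_poly_normal ('X^k - 1 : {poly F}).
have mon : ('X^k - 1 : {poly F}) \is monic by rewrite -polyC1 monicXnsubC.
rewrite (monicP mon) scale1r in hrs.
exists rs => //.
rewrite -separable_prod_XsubC -hrs unlock.
rewrite derivB derivXn derivC subr0.
apply/Bezout_coprimepP; exists (-1, (k%:R)^-1 *: 'X) => /=.
have kn0 : (k%:R : F) != 0 by rewrite pnatr_eq0 -lt0n.
rewrite -scaler_nat -scalerAl -scalerAr scalerA mulVf // scale1r -exprS prednK //.
by rewrite mulN1r opprB subrK eqpxx.
Qed.

Lemma diag_unity (F : numClosedFieldType) m k (G : 'M[F]_m.+1) : (0 < k)%N ->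
  G ^+ k = 1 -> exists2 P, P \in unitmx & exists d : 'rV[F]_m.+1,
    P *m G *m invmx P = diag_mx d /\ forall i, d 0 i ^+ k = 1.
Proof.
move=> k0 Gk.
have [rs urs hp] := sep_Xn F k0.
have : diagonalizable G.
  apply/diagonalizableP; exists rs => //.
  apply: mxminpoly_min; rewrite -hp rmorphB /= rmorphXn /= horner_mx_X rmorph1.
  by rewrite Gk subrr.
move=> [P Pu /diagonalizable_forPex [d /(simmxRL Pu) hd]].
exists P => //; exists d; split => // i.
have h1 : P *m G = diag_mx d *m P by rewrite hd mulmxKV.
have := intertwineX h1 k; rewrite Gk mulmx1 diagX => h2.
have h3 : diag_mx (\row_i d 0 i ^+ k) = 1%:M.
  by rewrite -[LHS](mulmxK Pu) -h2 mulmxV.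
by move/matrixP: h3 => /(_ i i); rewrite !mxE eqxx !mulr1n.
Qed.

Lemma transport (R : realType) k j (A B : 'M[R[i]]_k) Cm D G h :
  h \in unitmx -> rho2_witness j A B Cm D G ->
  rho2_witness j (h *m A *m invmx h) (h *m B *m invmx h) (h *m Cm)
        (D *m invmx h) (h *m G *m invmx h).
Proof.
move=> hu [Gu eA eB eC eD].
have iG : invmx (h *m G *m invmx h) = h *m invmx G *m invmx h.
  have hGu : h *m G *m invmx h \in unitmx by rewrite !unitmx_mul Gu hu unitmx_inv hu.
  have P1 : (h *m G *m invmx h) *m (h *m invmx G *m invmx h) = 1%:M.
    by rewrite !mulmxA mulmxKV // mulmxK // mulmxV.
  by rewrite -[LHS]mulmx1 -P1 mulKmx.
split.
- by rewrite !unitmx_mul Gu hu unitmx_inv hu.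
- by rewrite iG scalemxAl scalemxAr eA !mulmxA !mulmxKV.
- by rewrite iG scalemxAl scalemxAr eB !mulmxA !mulmxKV.
- by rewrite scalemxAr eC !mulmxA !mulmxKV.
- by rewrite iG scalemxAl eD !mulmxA !mulmxKV.
Qed.

Lemma expi_eq (R : realType) (a b : R) (N : nat) :
  a = b + N%:R * (pi *+ 2) -> expi a = expi b.
Proof. by move=> ->; rewrite expi_period. Qed.

Theorem mainTheorem7 (R : realType) (k j : nat) (hk : (0 < k)%N)
    (hj : (j < 2 * k)%N) (hjeven : ~~ odd j)
    (A B : 'M[R[i]]_k) (Cm : 'M[R[i]]_(k, 2)) (D : 'M[R[i]]_(2, k)) :
  in_Mkj j A B Cm D ->
  exists h : 'M[R[i]]_k, h \in unitmx /\
    exists x : 'I_k -> R[i],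
      (forall r, k.-unity_root (x r)) /\
      rho2_witness j (h *m A *m invmx h) (h *m B *m invmx h) (h *m Cm)
        (D *m invmx h) (@Omega R k j *: diag_mx (\row_r x r)).
Proof.
case: k hk hj A B Cm D => [//|n] _ hj A B Cm D [[Au hcomm hinj _] [G hG]].
case: hG => Gu eA eB eC eD.
have nr0 : (n.+1%:R : R) != 0 by rewrite pnatr_eq0.
have nr0' : (1 + n%:R : R) != 0 by rewrite -(natrD R 1 n) pnatr_eq0.
have [m hm] : exists m, j = (2 * m)%N.
  exists j./2; rewrite mul2n -[LHS]odd_double_half.
  by move/negbTE: hjeven => ->.
set Om := Omega R n.+1 j.
have Om0 : Om != 0 by apply: expi_neq0.
set Gp := Om^-1 *: G.
have GE : G = Om *: Gp by rewrite /Gp scalerA mulfV // scale1r.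
have commGp : forall X, G ^+ n.+1 *m X = X *m G ^+ n.+1 ->
    (Gp ^+ n.+1 - 1) *m X = X *m (Gp ^+ n.+1 - 1).
  move=> X h; rewrite mulmxBl mulmxBr mul1mx mulmx1 /Gp exprZn.
  by rewrite -scalemxAl h scalemxAr.
have cA : G *m A = @expi R (2%:R * j%:R * pi / n.+1%:R) *: (A *m G).
  by rewrite scalemxAl eA mulmxKV.
have cAN : @expi R (2%:R * j%:R * pi / n.+1%:R) ^+ n.+1 = 1.
  rewrite expi_nat -(expi0 R); apply: (@expi_eq R _ _ j).
  by rewrite add0r mulr2n; field; exact: nr0'.
have cB : G *m B = @expi R (2%:R * pi / n.+1%:R) *: (B *m G).
  by rewrite scalemxAl eB mulmxKV.
have cBN : @expi R (2%:R * pi / n.+1%:R) ^+ n.+1 = 1.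
  rewrite expi_nat -(expi0 R); apply: (@expi_eq R _ _ 1).
  by rewrite add0r mulr2n; field; exact: nr0'.
have := commX cA n.+1; rewrite cAN scale1r => GA.
have := commX cB n.+1; rewrite cBN scale1r => GB.
set e := @expi R (pi / n.+1%:R).
have e0 : e != 0 by apply: expi_neq0.
set s := \row_(r < 2) if (r : nat) == 0%N
     then @expi R (- (3%:R * (2%:R * j%:R * pi / n.+1%:R) / 4%:R))
     else @expi R (- ((2%:R * j%:R * pi / n.+1%:R) / 4%:R)).
have sE : @sigma_mx R (2%:R * j%:R * pi / n.+1%:R) = diag_mx s by [].
have hD1 : diag_mx s *m D = e *: (D *m G) by rewrite scalemxAl eD sE mulmxKV.
set t := \row_i ((Om * e)^-1 * s 0 i).
have hD2 : D *m Gp = diag_mx t *m D.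
  rewrite /Gp -scalemxAr.
  have -> : D *m G = e^-1 *: (diag_mx s *m D).
    by rewrite hD1 scalerA mulVf // scale1r.
  rewrite !mul_diag_mx; apply/matrixP => a b; rewrite !mxE invfM; ring.
have tN : forall i, t 0 i ^+ n.+1 = 1.
  move=> i; rewrite mxE exprMn exprVn.
  suff -> : s 0 i ^+ n.+1 = (Om * e) ^+ n.+1 by rewrite mulVf // expf_neq0 // mulf_neq0.
  case: i => [[|[|//]] hi]; rewrite mxE /= exprMn /Om /Omega /e !expi_nat -expiD; symmetry.
    apply: (@expi_eq R _ _ m.+1).
    by rewrite hm natrM -[m.+1]addn1 natrD mulr2n; field; exact: nr0'.
  apply: (@expi_eq R _ _ 1).
  by rewrite hm natrM mulr2n; field; exact: nr0'.
clearbody t.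
have DN := intertwineX hD2 n.+1.
rewrite diagX in DN.
have d1 : diag_mx (\row_i t 0 i ^+ n.+1) = 1%:M.
  by apply/matrixP => a b; rewrite !mxE tN.
rewrite d1 mul1mx in DN.
have GpN : Gp ^+ n.+1 = 1.
  apply/eqP; rewrite -subr_eq0; apply/eqP; apply: (stab_zero hcomm hinj).
  - by apply: commGp.
  - by apply: commGp.
  - by rewrite mulmxBr DN mulmx1 subrr.
have [P Pu [d [hd dN]]] := diag_unity (isT : (0 < n.+1)%N) GpN.
exists P; split => //; exists (fun r => d 0 r); split.
  by move=> r; rewrite unity_rootE dN.
have -> : Om *: diag_mx (\row_r d 0 r) = P *m G *m invmx P.
  rewrite GE -scalemxAr -scalemxAl hd; congr (_ *: diag_mx _).
  by apply/rowP => r; rewrite mxE.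
apply: transport => //.
Qed.
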